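(* Let $L\ge2$, $d\in\mathbb{N}_+$, and let $W_l(t)\in\mathbb{R}^{d\times d}$, $l\in[L]$, be gradient descent iterates for the loss $\ell=\frac12\|W_{L:1}X-Y\|_F^2$, where $X\in\mathbb{R}^{d\times N}$ satisfies $XX^\top=I_d$ and $Y\in\mathbb{R}^{d\times N}$, with update $$W_l(t)=(1-\eta\lambda)W_l(t-1)-\eta\,W_{L:l+1}^\top(t-1)\,\Gamma(t-1)\,W_{l-1:1}^\top(t-1),\quad \Gamma(t)=(W_{L:1}(t)X-Y)X^\top,$$ learning rate $\eta>0$, weight decay $\lambda\ge0$, and initialization $W_l^\top(0)W_l(0)=\varepsilon^2 I_d$ for all $l\in[L]$, $\varepsilon>0$. Let $\Phi=YX^\top$ have rank $r\in\mathbb{N}_+$ and suppose $m:=d-2r>0$. Then there exist orthonormal sets $\{u_i^{(l)}\}_{i=1}^m\subset\mathbb{R}^d$ and $\{v_i^{(l)}\}_{i=1}^m\subset\mathbb{R}^d$, $l\in[L]$, with $v_i^{(l+1)}=u_i^{(l)}$ for all $l\in[L-1]$ and $i\in[m]$, such that for all $t\ge0$, all $i\in[m]$ and all $l\in[L]$: (A) $W_l(t)v_i^{(l)}=\rho(t)u_i^{(l)}$; (B) $W_l^\top(t)u_i^{(l)}=\rho(t)v_i^{(l)}$; (C) $\Phi^\top W_{L:l+1}(t)u_i^{(l)}=0$; (D) $\Phi\,W_{l-1:1}^\top(t)v_i^{(l)}=0$, where $\rho(0)=\varepsilon$ and $\rho(t)=\rho(t-1)\big(1-\eta\lambda-\eta\,\rho(t-1)^{2(L-1)}\big)$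 for $t\ge1$.
   Context: $[L]=\{1,\dots,L\}$. $W_{j:i}=W_j\cdots W_i$ and $W_{j:i}^\top=W_i^\top\cdots W_j^\top$ for $j\ge i$; both are the identity if $j<i$. *)

(* Defs.v *)
From mathcomp Require Import all_boot all_order all_algebra.
From mathcomp Require Import reals.
Set Implicit Arguments. Unset Strict Implicit. Unset Printing Implicit Defensive.
Import GRing.Theory Num.Theory.
Local Open Scope ring_scope.

(* Layers are indexed 1-based by nat: F l is W_l for 1 <= l <= L.
   prodW F j i = W_j * W_(j-1) * ... * W_i  (for j >= i >= 1), identity if j < i. *)
Fixpoint prodW (R : ringType) (d : nat) (F : nat -> 'M[R]_d) (i j : nat) : 'M[R]_d :=
  match j with
  | 0 => 1%:M
  | j'.+1 => if (j'.+1 < i)%N then 1%:M else F j'.+1 *m prodW F i j'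
  end.

Fixpoint rho (R : ringType) (L : nat) (eta lam eps : R) (t : nat) : R :=
  match t with
  | 0 => eps
  | t'.+1 => let p := rho L eta lam eps t' in
             p * (1 - eta * lam - eta * p ^+ (2 * (L - 1)))
  end.

Definition orthonormal_vecs (R : ringType) (d m : nat) (u : 'I_m -> 'cV[R]_d) : Prop :=
  forall i j : 'I_m, (u i)^T *m u j = (i == j)%:R%:M.

(* Main.v *)
Require Import Defs.
From mathcomp Require Import all_boot all_order all_algebra.
From mathcomp Require Import reals.
From mathcomp Require Import zify ring.
Import Order.TTheory GRing.Theory Num.Theory.
Local Open Scope ring_scope.

Lemma rank_orth (R : realType) k d (E : 'M[R]_(k, d)) :
  E *m E^T = 1%:M -> \rank E = k.
Proof.
move=> EE; apply/eqP; rewrite eqn_leq rank_leq_row /=.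
by rewrite -{1}(mxrank1 R k) -EE mxrankM_maxl.
Qed.

Lemma nz_sq (R : realType) d (x : 'rV[R]_d) : x != 0 -> 0 < (x *m x^T) 0 0.
Proof.
move=> nx; rewrite !mxE lt_def; apply/andP; split; last first.
  by apply: sumr_ge0 => j _; rewrite mxE -expr2 sqr_ge0.
apply/negP => /eqP H; move/negP: nx; apply; apply/eqP; apply/matrixP => i j.
rewrite !ord1 mxE; apply/eqP.
have Hn : forall l : 'I_d, true -> 0 <= x 0 l * x^T l 0.
  by move=> l _; rewrite mxE -expr2 sqr_ge0.
have := psumr_eq0P Hn H (i:=j) isT.
rewrite mxE -expr2 => /eqP; rewrite sqrf_eq0 => /eqP ->.
by [].
Qed.

Lemma gram_schmidt (R : realType) d n (S : 'M[R]_(n, d)) k :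
  (k <= \rank S)%N -> exists E : 'M[R]_(k, d), E *m E^T = 1%:M /\ (E <= S)%MS.
Proof.
elim: k => [|k IH] hk.
  exists 0; split; first by apply/matrixP => i []. 
  by rewrite sub0mx.
have [E [EE ES]] := IH (ltnW hk).
set K := kermx E^T.
set C := (S :&: K)%MS.
have rK : \rank K = (d - k)%N by rewrite mxrank_ker mxrank_tr (@rank_orth _ _ _ _ EE).
have kd : (k <= d)%N by rewrite -(@rank_orth _ _ _ _ EE) rank_leq_col.
have rC : (0 < \rank C)%N.
  have := mxrank_sum_cap S K; have := rank_leq_col (S + K)%MS.
  rewrite -/C rK; lia.
set x := nz_row C.
have nx : x != 0 by rewrite nz_row_eq0 -mxrank_eq0 -lt0n.
have xC : (x <= C)%MS by exact: nz_row_sub.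
have xE : x *m E^T = 0 by apply/sub_kermxP; apply: submx_trans xC (capmxSr _ _).
have xS : (x <= S)%MS by apply: submx_trans xC (capmxSl _ _).
set a := (x *m x^T) 0 0.
have a0 : 0 < a by exact: nz_sq.
set s := Num.sqrt a.
have s0 : 0 < s by rewrite sqrtr_gt0.
set y := s^-1 *: x.
have yE : y *m E^T = 0 by rewrite /y -scalemxAl xE scaler0.
have Ey : E *m y^T = 0 by rewrite -[E *m y^T]trmxK trmx_mul trmxK yE trmx0.
have yy : y *m y^T = 1%:M.
  rewrite /y linearZ /= -scalemxAl -scalemxAr scalerA [x *m x^T]mx11_scalar -/a.
  rewrite -mul_scalar_mx -scalar_mxM.
  have -> : s^-1 * s^-1 * a = 1.
    have sa : s ^+ 2 = a by rewrite sqr_sqrtr // ltW.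
    rewrite -sa expr2; have sn : s != 0 by rewrite gt_eqF.
    by field.
  by [].
suff : exists E0 : 'M[R]_(1 + k, d), E0 *m E0^T = 1%:M /\ (E0 <= S)%MS by [].
exists (col_mx y E); split.
  rewrite tr_col_mx mul_col_row yy yE Ey EE.
  by rewrite -(scalar_mx_block 1 k (1 : R)).
by rewrite col_mx_sub ES andbT /y scalemx_sub.
Qed.

Lemma prodW_lt (R : realType) d (F : nat -> 'M[R]_d) i j :
  (j < i)%N -> prodW F i j = 1%:M.
Proof. by case: j => //= j ->. Qed.

Lemma prodW_S (R : realType) d (F : nat -> 'M[R]_d) i j :
  (i <= j.+1)%N -> prodW F i j.+1 = F j.+1 *m prodW F i j.
Proof. by move=> h /=; rewrite ltnNge h. Qed.

Lemma chainA (R : realType) d (F : nat -> 'M[R]_d) (w : nat -> 'cV[R]_d) (c : R) L :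
  (forall l, (1 <= l <= L)%N -> F l *m w l = c *: w l.+1) ->
  forall n i, (1 <= i)%N -> (i.-1 + n <= L)%N ->
  prodW F i (i.-1 + n)%N *m w i = c ^+ n *: w (i + n)%N.
Proof.
move=> HA; elim=> [|n IH] i i1 hL.
  rewrite !addn0 prodW_lt; last by lia.
  by rewrite mul1mx expr0 scale1r.
rewrite addnS prodW_S; last by lia.
rewrite -mulmxA IH; [|lia|lia].
rewrite -scalemxAr.
have e : (i.-1 + n).+1 = (i + n)%N by lia.
rewrite e HA; last by lia.
by rewrite scalerA -exprSr addnS.
Qed.

Lemma chainB (R : realType) d (F : nat -> 'M[R]_d) (w : nat -> 'cV[R]_d) (c : R) L :
  (forall l, (1 <= l <= L)%N -> (F l)^T *m w l.+1 = c *: w l) ->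
  forall n i, (1 <= i)%N -> (i.-1 + n <= L)%N ->
  (prodW F i (i.-1 + n)%N)^T *m w (i + n)%N = c ^+ n *: w i.
Proof.
move=> HB; elim=> [|n IH] i i1 hL.
  by rewrite !addn0 prodW_lt ?trmx1 ?mul1mx ?expr0 ?scale1r //; lia.
rewrite addnS prodW_S; last by lia.
rewrite trmx_mul -mulmxA.
have e : (i.-1 + n).+1 = (i + n)%N by lia.
rewrite e addnS HB; last by lia.
rewrite -scalemxAr IH; [|lia|lia].
by rewrite scalerA -exprS.
Qed.

Lemma chainA' (R : realType) d (F : nat -> 'M[R]_d) (w : nat -> 'cV[R]_d) (c : R) L :
  (forall l, (1 <= l <= L)%N -> F l *m w l = c *: w l.+1) ->
  forall i j, (1 <= i)%N -> (i <= j.+1)%N -> (j <= L)%N ->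
  prodW F i j *m w i = c ^+ (j.+1 - i) *: w j.+1.
Proof.
move=> HA i j h1 h2 h3.
have := @chainA _ _ _ _ _ _ HA (j.+1 - i)%N i h1.
have -> : (i.-1 + (j.+1 - i))%N = j by lia.
have -> : (i + (j.+1 - i))%N = j.+1 by lia.
by apply.
Qed.

Lemma chainB' (R : realType) d (F : nat -> 'M[R]_d) (w : nat -> 'cV[R]_d) (c : R) L :
  (forall l, (1 <= l <= L)%N -> (F l)^T *m w l.+1 = c *: w l) ->
  forall i j, (1 <= i)%N -> (i <= j.+1)%N -> (j <= L)%N ->
  (prodW F i j)^T *m w j.+1 = c ^+ (j.+1 - i) *: w i.
Proof.
move=> HB i j h1 h2 h3.
have := @chainB _ _ _ _ _ _ HB (j.+1 - i)%N i h1.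
have -> : (i.-1 + (j.+1 - i))%N = j by lia.
have -> : (i + (j.+1 - i))%N = j.+1 by lia.
by apply.
Qed.

Fixpoint vseq (R : realType) d (F : nat -> 'M[R]_d) (e : R) (v0 : 'cV[R]_d) (n : nat) : 'cV[R]_d :=
  match n with 0 => v0 | n'.+1 => e^-1 *: (F n'.+1 *m vseq R d F e v0 n') end.
Arguments vseq {R d}.

Lemma chainA2 (R : realType) d (F : nat -> 'M[R]_d) (w : nat -> 'cV[R]_d) (c : R) L :
  (forall l, (1 <= l <= L)%N -> F l *m w l = c *: w l.+1) ->
  forall i j k n, (1 <= i)%N -> (i <= j.+1)%N -> (j <= L)%N -> k = j.+1 -> n = (j.+1 - i)%N ->
  prodW F i j *m w i = c ^+ n *: w k.
Proof. by move=> HA i j k n h1 h2 h3 -> ->; apply: (@chainA' _ _ _ _ _ _ HA). Qed.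

Lemma chainB2 (R : realType) d (F : nat -> 'M[R]_d) (w : nat -> 'cV[R]_d) (c : R) L :
  (forall l, (1 <= l <= L)%N -> (F l)^T *m w l.+1 = c *: w l) ->
  forall i j k n, (1 <= i)%N -> (i <= j.+1)%N -> (j <= L)%N -> k = j.+1 -> n = (j.+1 - i)%N ->
  (prodW F i j)^T *m w k = c ^+ n *: w i.
Proof. by move=> HB i j k n h1 h2 h3 -> ->; apply: (@chainB' _ _ _ _ _ _ HB). Qed.

Theorem lemma1 (R : realType) (L d N r : nat)
  (X : 'M[R]_(d, N)) (Y : 'M[R]_(d, N)) (eta lam eps : R)
  (W : nat -> nat -> 'M[R]_d) :
  (2 <= L)%N -> (0 < d)%N ->
  X *m X^T = 1%:M ->
  0 < eta -> 0 <= lam -> 0 < eps ->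
  (forall l, (1 <= l <= L)%N -> (W 0%N l)^T *m W 0%N l = (eps ^+ 2)%:M) ->
  (forall t l, (1 <= l <= L)%N ->
     W t.+1 l = (1 - eta * lam) *: W t l
       - eta *: ((prodW (W t) l.+1 L)^T
                 *m ((prodW (W t) 1 L *m X - Y) *m X^T)
                 *m (prodW (W t) 1 l.-1)^T)) ->
  \rank (Y *m X^T) = r -> (0 < r)%N ->
  (2 * r < d)%N ->
  let m := (d - 2 * r)%N in
  let Phi := Y *m X^T in
  exists (u v : nat -> 'I_m -> 'cV[R]_d),
    (forall l, (1 <= l <= L)%N -> orthonormal_vecs (u l) /\ orthonormal_vecs (v l)) /\
    (forall l (i : 'I_m), (1 <= l < L)%N -> v l.+1 i = u l i) /\
    (forall (t : nat) (i : 'I_m) l, (1 <= l <= L)%N ->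
       W t l *m v l i = rho L eta lam eps t *: u l i /\
       (W t l)^T *m u l i = rho L eta lam eps t *: v l i /\
       Phi^T *m prodW (W t) l.+1 L *m u l i = 0 /\
       Phi *m (prodW (W t) 1 l.-1)^T *m v l i = 0).
Proof.
move=> L2 d0 XX eta0 lam0 eps0 W0 Wup rk r0 rd m Phi.
have rk' : \rank Phi = r := rk.
set P0 := prodW (W 0%N) 1 L.
set S := (kermx Phi^T :&: kermx (Phi^T *m P0)^T)%MS.
have rS : (m <= \rank S)%N.
  have := mxrank_sum_cap (kermx Phi^T) (kermx (Phi^T *m P0)^T).
  rewrite !mxrank_ker !mxrank_tr.
  have := rank_leq_col (kermx Phi^T + kermx (Phi^T *m P0)^T)%MS.
  have := mxrankM_maxl Phi^T P0.
  rewrite mxrank_tr rk' /m /S.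
  set a := \rank (Phi^T *m P0); set b := \rank (_ + _)%MS; set c := \rank (_ :&: _)%MS.
  move=> h1 h2 h3; clearbody a b c; lia.
have [E [EE ES]] := @gram_schmidt _ _ _ S m rS.
set v1 := fun i : 'I_m => (row i E)^T.
have rowS : forall i, (row i E <= S)%MS by move=> i; apply: submx_trans (row_sub _ _) ES.
have Pv1 : forall i, Phi *m v1 i = 0.
  move=> i; have h : row i E *m Phi^T = 0.
    by apply/sub_kermxP; apply: submx_trans (rowS i) (capmxSl _ _).
  by rewrite /v1 -(trmxK Phi) -trmx_mul h trmx0.
have PPv1 : forall i, Phi^T *m P0 *m v1 i = 0.
  move=> i; have h : row i E *m (Phi^T *m P0)^T = 0.
    by apply/sub_kermxP; apply: submx_trans (rowS i) (capmxSr _ _).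
  by rewrite /v1 -(trmxK (Phi^T *m P0)) -trmx_mul h trmx0.
set v := fun (l : nat) (i : 'I_m) => vseq (W 0%N) eps (v1 i) l.-1.
have vS : forall l i, (1 <= l)%N -> v l.+1 i = eps^-1 *: (W 0%N l *m v l i).
  by move=> [|l] i //.
have epsn : eps != 0 by rewrite gt_eqF.
have vON : forall n, (n <= L)%N -> orthonormal_vecs (fun i => vseq (W 0%N) eps (v1 i) n).
  elim=> [|n IH] hn i j /=.
    rewrite /v1 trmxK; apply/matrixP => a b; rewrite !ord1 !mxE eqxx mulr1n.
    have h : (E *m E^T) i j = (1%:M : 'M[R]_m) i j by rewrite EE.
    move: h; rewrite !mxE => <-.
    by apply: eq_bigr => k _; rewrite !mxE.
  rewrite !linearZ /= trmx_mul -scalemxAl scalerA -mulmxA (mulmxA (W 0%N n.+1)^T) W0; last by lia.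
  rewrite mul_scalar_mx -scalemxAr scalerA IH; last by lia.
  have -> : eps^-1 * eps^-1 * eps ^+ 2 = 1 by field.
  by rewrite scale1r.
have CH : forall (F : nat -> 'M[R]_d) c i,
    (forall l, (1 <= l <= L)%N -> F l *m v l i = c *: v l.+1 i) ->
    (forall l, (1 <= l <= L)%N -> (F l)^T *m v l.+1 i = c *: v l i) ->
    forall l, (1 <= l <= L)%N ->
    [/\ (prodW F 1 l.-1)^T *m v l i = c^+(l.-1) *: v 1%N i,
        prodW F 1 L *m v 1%N i = c^+L *: v L.+1 i,
        (prodW F l.+1 L)^T *m v L.+1 i = c^+(L-l) *: v l.+1 i,
        prodW F l.+1 L *m v l.+1 i = c^+(L-l) *: v L.+1 i &
        ((prodW F 1 L)^T *m v L.+1 i = c^+L *: v 1%N i /\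
        prodW F 1 l.-1 *m v 1%N i = c^+(l.-1) *: v l i)].
  move=> F c i HA HB l hl; split; [| | | |split].
  - by apply: (@chainB2 _ _ F (fun l => v l i) c L HB 1 l.-1 l l.-1); lia.
  - by apply: (@chainA2 _ _ F (fun l => v l i) c L HA 1 L L.+1 L); lia.
  - by apply: (@chainB2 _ _ F (fun l => v l i) c L HB l.+1 L L.+1 (L - l)); lia.
  - by apply: (@chainA2 _ _ F (fun l => v l i) c L HA l.+1 L L.+1 (L - l)); lia.
  - by apply: (@chainB2 _ _ F (fun l => v l i) c L HB 1 L L.+1 L); lia.
  - by apply: (@chainA2 _ _ F (fun l => v l i) c L HA 1 l.-1 l l.-1); lia.
have HA0 : forall i l, (1 <= l <= L)%N -> W 0%N l *m v l i = eps *: v l.+1 i.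
  move=> i l hl; rewrite vS; last by lia.
  by rewrite scalerA mulfV // scale1r.
have HB0 : forall i l, (1 <= l <= L)%N -> (W 0%N l)^T *m v l.+1 i = eps *: v l i.
  move=> i l hl; rewrite vS; last by lia.
  rewrite -scalemxAr mulmxA W0 // mul_scalar_mx scalerA.
  by have -> : eps^-1 * eps ^+ 2 = eps by field.
have hPv : forall i, Phi *m v 1%N i = 0 by move=> i; exact: Pv1.
have hPv' : forall i, Phi^T *m v L.+1 i = 0.
  move=> i; have [_ h _ _ _] := CH _ _ i (HA0 i) (HB0 i) L ltac:(lia).
  have := PPv1 i; rewrite -mulmxA.
  change (Phi^T *m (P0 *m v 1%N i) = 0 -> Phi^T *m v L.+1 i = 0).
  rewrite /P0 h -scalemxAr => /eqP; rewrite scalemx_eq0 expf_eq0 (negbTE epsn) andbF /=.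
  by move/eqP.
have hG : forall t, (prodW (W t) 1 L *m X - Y) *m X^T = prodW (W t) 1 L - Phi.
  by move=> t; rewrite mulmxBl -mulmxA XX mulmx1.
have key : forall i t,
    (forall l, (1 <= l <= L)%N -> W t l *m v l i = rho L eta lam eps t *: v l.+1 i) /\
    (forall l, (1 <= l <= L)%N -> (W t l)^T *m v l.+1 i = rho L eta lam eps t *: v l i).
  move=> i; elim=> [|t [IHA IHB]]; first by split; [exact: HA0 | exact: HB0].
  set c := rho L eta lam eps t.
  have rS1 : rho L eta lam eps t.+1 = c * (1 - eta * lam - eta * c ^+ (2 * (L - 1))) by [].
  split=> l hl; have [h1 [h2 [h3 [h4 [h5 h6]]]]] := CH _ _ i IHA IHB l hl; rewrite Wup // hG.
  - rewrite mulmxBl -!scalemxAl -!mulmxA h1 -!scalemxAr mulmxBl h2 hPv subr0.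
    rewrite -scalemxAr h3 IHA // !scalerA -scalerBl rS1; congr (_ *: _).
    have e : c ^+ l.-1 * c ^+ L * c ^+ (L - l) = c * c ^+ (2 * (L - 1)).
      by rewrite -!exprD -exprS; congr (_ ^+ _); lia.
    rewrite -/c -[eta * _ * _]mulrA e; ring.
  - rewrite linearB /= !linearZ /= !trmx_mul !trmxK linearB /=.
    rewrite scalerN mulmxBl -!scalemxAl -!mulmxA h4 -!scalemxAr mulmxBl h5 hPv' subr0.
    rewrite -scalemxAr h6 IHB // !scalerA -scalerBl; congr (_ *: _).
    have e : c ^+ (L - l) * c ^+ L * c ^+ l.-1 = c * c ^+ (2 * (L - 1)).
      by rewrite -!exprD -exprS; congr (_ ^+ _); lia.
    rewrite -/c -[eta * _ * _]mulrA e; ring.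
exists (fun l i => v l.+1 i), v; split; [|split].
- move=> l hl; split.
    apply: vON; lia.
  by case: l hl => // l hl; apply: vON; lia.
- by [].
- move=> t i l hl; have [HA HB] := key i t.
  have [h1 _ _ h4 _] := CH _ _ i HA HB l hl.
  split; first exact: HA.
  split; first exact: HB.
  split.
    by rewrite -mulmxA h4 -scalemxAr hPv' scaler0.
  by rewrite -mulmxA h1 -scalemxAr hPv scaler0.
Qed.
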